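(* For $n\ge1$ let $\mathcal{R}_n:=\mathbb{K}\langle x_1,\dots,x_n\rangle$ (noncommutative polynomials) with compositions $$(P\bullet_iQ)(x_1,\dots,x_{n+m-1}):=P(x_1,\dots,x_{i-1},x_i+\cdots+x_{i+m-1},x_{i+m},\dots,x_{n+m-1})\,Q(x_i,\dots,x_{i+m-1})$$ for $P\in\mathcal{R}_n$, $Q\in\mathcal{R}_m$, $1\le i\le n$. Then $\mathcal{R}$ is a pre-shuffle algebra isomorphic to $PerAsDer$, via $\mathrm{id}\mapsto1\in\mathbb{K}\langle x_1\rangle$, $D\mapsto x_1$, $\mu\mapsto1\in\mathbb{K}\langle x_1,x_2\rangle$. Under this isomorphism the operation $\big(\cdots((\mu_n\bullet_{j_k}D)\bullet_{j_{k-1}}D)\cdots\big)\bullet_{j_1}D$ corresponds to the noncommutative monomial $x_{j_k}x_{j_{k-1}}\cdots x_{j_1}$; in particular $PerAsDer_n\cong\mathbb{K}\langle x_1,\dots,x_n\rangle$.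
   Context: A pre-shuffle algebra (Ronco) is a family of vector spaces $(\mathcal{P}_n)_{n\ge1}$ with linear maps $\bullet_i:\mathcal{P}_m\otimes\mathcal{P}_n\to\mathcal{P}_{m+n-1}$, $1\le i\le m$, satisfying $(\lambda\bullet_i\mu)\bullet_{i-1+j}\nu=\lambda\bullet_i(\mu\bullet_j\nu)$ for $\lambda\in\mathcal{P}_l$, $\mu\in\mathcal{P}_m$, $1\le i\le l$, $1\le j\le m$ (no parallel-composition axiom), together with a unit $\mathrm{id}\in\mathcal{P}_1$. $PerAsDer$ is the pre-shuffle algebra generated by a unary operation $D$ and a binary operation $\mu$ subject to the relations $\mu\bullet_1\mu=\mu\bullet_2\mu$, $D\bullet_1\mu=\mu\bullet_1D+\mu\bullet_2D$, $(\alpha\bullet_iD)\bullet_j\mu=(\alpha\bullet_j\mu)\bullet_iD$ and $(\alpha\bullet_i\mu)\bullet_{j+1}D=(\alpha\bullet_jD)\bullet_i\mu$ for every operation $\alpha$ and all $i<j$. $\mu_n$ denotes the composite of $n-1$ copies of $\mu$ (well defined by associativity), $\mu_1=\mathrm{id}$. *)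

(* Defs.v *)
From HB Require Import structures.
From mathcomp Require Import all_boot all_order all_algebra.
From Stdlib Require Import ClassicalEpsilon FunctionalExtensionality.

Set Implicit Arguments.
Unset Strict Implicit.
Unset Printing Implicit Defensive.

Import Order.TTheory GRing.Theory Num.Theory.
Local Open Scope ring_scope.

Definition asbool (P : Prop) : bool :=
  if excluded_middle_informative P then true else false.

Lemma asboolP (P : Prop) : reflect P (asbool P).
Proof. by rewrite /asbool; case: excluded_middle_informative => h; constructor. Qed.

(* Coefficient functions on noncommutative words.  A word is a         *)
(* [seq nat]; the letter [j : nat] stands for the variable x_(j+1).    *)
Definition ncfun (K : fieldType) := seq nat -> K.

Section NCFun.
Variable K : fieldType.

Definition ncfun_eq (f g : ncfun K) : bool := asbool (f = g).
Lemma ncfun_eqP : Equality.axiom ncfun_eq.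
Proof. by move=> f g; apply: asboolP. Qed.
HB.instance Definition _ := hasDecEq.Build (ncfun K) ncfun_eqP.

Definition ncfun_find (P : pred (ncfun K)) (n : nat) : option (ncfun K) :=
  match excluded_middle_informative (exists x, P x) with
  | left h => Some (proj1_sig (constructive_indefinite_description _ h))
  | right _ => None
  end.

Lemma ncfun_find_correct P n x : ncfun_find P n = Some x -> P x.
Proof.
rewrite /ncfun_find; case: excluded_middle_informative => // h [<-].
exact: proj2_sig (constructive_indefinite_description _ h).
Qed.

Lemma ncfun_find_complete (P : pred (ncfun K)) :
  (exists x, P x) -> exists n, ncfun_find P n.
Proof.
move=> ex; exists 0%N; rewrite /ncfun_find.
by case: excluded_middle_informative.
Qed.

Lemma ncfun_find_ext (P Q : pred (ncfun K)) :
  P =1 Q -> ncfun_find P =1 ncfun_find Q.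
Proof. by move=> /functional_extensionality ->. Qed.

HB.instance Definition _ := hasChoice.Build (ncfun K)
  ncfun_find_correct ncfun_find_complete ncfun_find_ext.

Definition ncfun_zero : ncfun K := fun _ => 0.
Definition ncfun_opp (f : ncfun K) : ncfun K := fun w => - f w.
Definition ncfun_add (f g : ncfun K) : ncfun K := fun w => f w + g w.
Definition ncfun_scale (a : K) (f : ncfun K) : ncfun K := fun w => a * f w.

Lemma ncfun_addA : associative ncfun_add.
Proof. by move=> f g h; apply: functional_extensionality => w; rewrite /ncfun_add addrA. Qed.
Lemma ncfun_addC : commutative ncfun_add.
Proof. by move=> f g; apply: functional_extensionality => w; rewrite /ncfun_add addrC. Qed.
Lemma ncfun_add0 : left_id ncfun_zero ncfun_add.
Proof. by move=> f; apply: functional_extensionality => w; rewrite /ncfun_add add0r. Qed.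
Lemma ncfun_addN : left_inverse ncfun_zero ncfun_opp ncfun_add.
Proof. by move=> f; apply: functional_extensionality => w; rewrite /ncfun_add /ncfun_opp addNr. Qed.

HB.instance Definition _ := GRing.isZmodule.Build (ncfun K)
  ncfun_addA ncfun_addC ncfun_add0 ncfun_addN.

Lemma ncfun_scaleA a b (v : ncfun K) :
  ncfun_scale a (ncfun_scale b v) = ncfun_scale (a * b) v.
Proof. by apply: functional_extensionality => w; rewrite /ncfun_scale mulrA. Qed.
Lemma ncfun_scale1 : left_id 1 ncfun_scale.
Proof. by move=> f; apply: functional_extensionality => w; rewrite /ncfun_scale mul1r. Qed.
Lemma ncfun_scaleDr : right_distributive ncfun_scale +%R.
Proof. by move=> a f g; apply: functional_extensionality => w; rewrite /ncfun_scale mulrDr. Qed.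
Lemma ncfun_scaleDl (v : ncfun K) : {morph ncfun_scale^~ v : a b / a + b}.
Proof. by move=> a b; apply: functional_extensionality => w; rewrite /ncfun_scale mulrDl. Qed.

HB.instance Definition _ := GRing.Zmodule_isLmodule.Build K (ncfun K)
  ncfun_scaleA ncfun_scale1 ncfun_scaleDr ncfun_scaleDl.

Definition is_ncpoly (n : nat) (f : ncfun K) : Prop :=
  exists N : nat, forall w, f w != 0 -> (size w <= N)%N && all (fun j => j < n)%N w.

Definition ncpoly_pred (n : nat) : pred (ncfun K) := fun f => asbool (is_ncpoly n f).

Lemma ncpoly_closed n : subsemimod_closed (ncpoly_pred n).
Proof.
split; first split.
- by apply/asboolP; exists 0%N => w; rewrite eqxx.
- move=> f g /asboolP [N1 H1] /asboolP [N2 H2]; apply/asboolP; exists (maxn N1 N2) => w.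
  have [f0|/H1/andP[s a]] := eqVneq (f w) 0.
    have [g0|/H2/andP[s a]] := eqVneq (g w) 0.
      by rewrite /GRing.add /= /ncfun_add f0 g0 addr0 eqxx.
    by rewrite a leq_max s orbT.
  by rewrite a leq_max s.
- move=> a f /asboolP [N H]; apply/asboolP; exists N => w.
  rewrite /GRing.scale /= /ncfun_scale mulf_eq0 negb_or => /andP[_ /H] //.
Qed.

Definition ncpoly (n : nat) := {f : ncfun K | ncpoly_pred n f}.
HB.instance Definition _ n :=
  GRing.isSubmodClosed.Build K (ncfun K) (ncpoly_pred n) (ncpoly_closed n).
HB.instance Definition _ n := [isSub of ncpoly n for @sval (ncfun K) (fun f => ncpoly_pred n f)].
HB.instance Definition _ n := [Choice of ncpoly n by <:].
HB.instance Definition _ n := [SubChoice_isSubLmodule of ncpoly n by <:].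

End NCFun.

(* [ps_car P n] is the K-vector space P_n (only n >= 1 is meaningful;  *)
(* the space at n = 0 is never constrained), [ps_comp P i x y] is       *)
Record preShuffle (K : fieldType) := PreShuffle {
  ps_car : nat -> lmodType K;
  ps_comp : forall m n : nat, nat -> ps_car m -> ps_car n -> ps_car (m + n).-1;
  ps_id : ps_car 1
}.
Arguments ps_car {K} _ _.
Arguments ps_comp {K} _ {m n} _ _ _.
Arguments ps_id {K} _.

Definition ps_tr (K : fieldType) (P : preShuffle K) (a b : nat) (e : a = b)
  (x : ps_car P a) : ps_car P b := eq_rect a (fun k => ps_car P k) x b e.
Arguments ps_tr {K} P {a b} e x.

Definition is_preShuffle (K : fieldType) (P : preShuffle K) : Prop :=
  [/\ (forall (m n i : nat), (0 < n)%N -> (1 <= i <= m)%N ->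
         forall (a : K) (x1 x2 : ps_car P m) (y : ps_car P n),
           ps_comp P i (a *: x1 + x2) y = a *: ps_comp P i x1 y + ps_comp P i x2 y),
      (forall (m n i : nat), (0 < n)%N -> (1 <= i <= m)%N ->
         forall (a : K) (x : ps_car P m) (y1 y2 : ps_car P n),
           ps_comp P i x (a *: y1 + y2) = a *: ps_comp P i x y1 + ps_comp P i x y2),
      (forall (l m n i j : nat), (0 < n)%N -> (1 <= i <= l)%N -> (1 <= j <= m)%N ->
         forall (x : ps_car P l) (y : ps_car P m) (z : ps_car P n)
                (e : (l + (m + n).-1).-1 = ((l + m).-1 + n).-1),
           ps_comp P (i.-1 + j) (ps_comp P i x y) z
           = ps_tr P e (ps_comp P i x (ps_comp P j y z))),
      (forall (n : nat) (x : ps_car P n.+1), ps_comp P 1 (ps_id P) x = x)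
    & (forall (n i : nat) (x : ps_car P n), (1 <= i <= n)%N ->
         forall e : (n + 1).-1 = n, ps_tr P e (ps_comp P i x (ps_id P)) = x)].

Definition is_psmorph (K : fieldType) (P Q : preShuffle K)
  (f : forall n, ps_car P n -> ps_car Q n) : Prop :=
  [/\ (forall n (a : K) (x y : ps_car P n), f n (a *: x + y) = a *: f n x + f n y),
      (forall (m n i : nat), (0 < n)%N -> (1 <= i <= m)%N ->
         forall (x : ps_car P m) (y : ps_car P n),
           f _ (ps_comp P i x y) = ps_comp Q i (f m x) (f n y))
    & f 1%N (ps_id P) = ps_id Q].

Definition PerAsDer_rel (K : fieldType) (P : preShuffle K)
  (d : ps_car P 1) (mu : ps_car P 2) : Prop :=
  [/\ ps_comp P 1 mu mu = ps_comp P 2 mu mu,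
      ps_comp P 1 d mu = ps_comp P 1 mu d + ps_comp P 2 mu d,
      (forall (k : nat) (a : ps_car P k) (i j : nat), (1 <= i)%N -> (i < j)%N -> (j <= k)%N ->
         forall e : (((k + 2).-1 + 1).-1 = ((k + 1).-1 + 2).-1),
           ps_comp P j (ps_comp P i a d) mu = ps_tr P e (ps_comp P i (ps_comp P j a mu) d))
    & (forall (k : nat) (a : ps_car P k) (i j : nat), (1 <= i)%N -> (i < j)%N -> (j <= k)%N ->
         forall e : (((k + 1).-1 + 2).-1 = ((k + 2).-1 + 1).-1),
           ps_comp P j.+1 (ps_comp P i a mu) d = ps_tr P e (ps_comp P i (ps_comp P j a d) mu))].

(* mu_(n+1) = mu \bullet_1 mu_n, mu_1 = id ; [ps_mun P mu n] : P_(n+1) *)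
Fixpoint ps_mun (K : fieldType) (P : preShuffle K) (mu : ps_car P 2) (n : nat)
  : ps_car P n.+1 :=
  match n with
  | 0 => ps_id P
  | n'.+1 => ps_comp P 1 mu (ps_mun mu n')
  end.

Lemma addn1_pred (n : nat) : (n + 1).-1 = n.
Proof. by rewrite addn1. Qed.

Definition ps_compD (K : fieldType) (P : preShuffle K) (d : ps_car P 1) (n j : nat)
  (a : ps_car P n) : ps_car P n := ps_tr P (addn1_pred n) (ps_comp P j a d).

Section RAlg.
Variable K : fieldType.

(* coefficient of the word w in                                          *)
(*   P(x_1,..,x_(i-1), x_i+..+x_(i+m-1), x_(i+m),..,x_(n+m-1)) *          *)
(*   Q(x_i,..,x_(i+m-1))                                                  *)
(* for P in K<x_1..x_n>, Q in K<x_1..x_m> (letters are 0-based).         *)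
Definition rc_phi (m i j : nat) : nat :=
  if (j < i.-1)%N then j else if (j < i.-1 + m)%N then i.-1 else (j.+1 - m)%N.
Definition rc_inrange (m i j : nat) : bool := (i.-1 <= j < i.-1 + m)%N.
Definition rc_psi (i j : nat) : nat := (j - i.-1)%N.

Definition rawcomp (n m i : nat) (p q : ncfun K) : ncfun K := fun w =>
  if all (fun j => j < (n + m).-1)%N w then
    \sum_(k < (size w).+1)
       p (map (rc_phi m i) (take k w)) *
       (if all (rc_inrange m i) (drop k w) then q (map (rc_psi i) (drop k w)) else 0)
  else 0.

Lemma rawcomp_closed n m i (p : ncpoly K n) (q : ncpoly K m) :
  ncpoly_pred (n + m).-1 (rawcomp n m i (val p) (val q)).
Proof.
move: (valP p) (valP q) => /asboolP [N1 H1] /asboolP [N2 H2].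
apply/asboolP; exists (N1 + N2)%N => w.
rewrite /rawcomp; case: ifP => al; last by rewrite eqxx.
move=> nz; apply/andP; split=> //.
move: nz; apply: contraR; rewrite -ltnNge => lt.
rewrite big1 // => k _.
have kw : (k <= size w)%N by rewrite -ltnS.
have [hp|hp] := leqP k N1.
  case: ifP => _; last by rewrite mulr0.
  suff -> : val q (map (rc_psi i) (drop k w)) = 0 by rewrite mulr0.
  apply/eqP; apply: (contraNT (H2 _)).
  rewrite size_map size_drop negb_and -ltnNge ltn_subRL.
  by rewrite (leq_ltn_trans (leq_add hp (leqnn N2)) lt).
suff -> : val p (map (rc_phi m i) (take k w)) = 0 by rewrite mul0r.
apply/eqP; apply: (contraNT (H1 _)).
by rewrite size_map size_take_min (minn_idPl kw) negb_and -ltnNge hp.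
Qed.

Definition Rcar (n : nat) : lmodType K := ncpoly K n.

Definition Rcomp (n m : nat) (i : nat) (p : Rcar n) (q : Rcar m) : Rcar (n + m).-1 :=
  Sub (rawcomp n m i (val p) (val q)) (rawcomp_closed i p q).

Definition ncmono (w : seq nat) : ncfun K := fun w' => (w' == w)%:R.

Lemma ncmono_closed n w : all (fun j => j < n)%N w -> ncpoly_pred n (ncmono w).
Proof.
move=> aw; apply/asboolP; exists (size w) => w'.
rewrite /ncmono; case: (eqVneq w' w) => [->|_]; first by rewrite leqnn aw.
by rewrite /= eqxx.
Qed.

Definition Rone (n : nat) : Rcar n := Sub (ncmono [::]) (@ncmono_closed n [::] (erefl true)).
Definition Rx1 : Rcar 1 := Sub (ncmono [:: 0%N]) (@ncmono_closed 1 [:: 0%N] (erefl true)).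

Definition RAlg : preShuffle K := @PreShuffle K Rcar Rcomp (Rone 1).

End RAlg.

Arguments PerAsDer_rel {K} P d mu.
Arguments is_psmorph {K} P Q f.
Arguments ps_mun {K} P mu n.
Arguments ps_compD {K} P d {n} j a.

(* Main.v *)
Require Import Defs.
From HB Require Import structures.
From mathcomp Require Import all_boot all_order all_algebra.
From mathcomp Require Import zify.
From Stdlib Require Import Eqdep_dec FunctionalExtensionality ClassicalEpsilon.

Module G1.
Set Implicit Arguments.
Unset Strict Implicit.
Unset Printing Implicit Defensive.
Import GRing.Theory.
Local Open Scope ring_scope.

Section Gen.
Variable K : fieldType.
Variable P : preShuffle K.

Definition pk (n : nat) (x : ps_car P n) : {n : nat & ps_car P n} := existT _ n x.

Lemma pk_inj n (x y : ps_car P n) : pk x = pk y -> x = y.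
Proof. exact: (inj_pair2_eq_dec nat PeanoNat.Nat.eq_dec (fun k => ps_car P k) n x y). Qed.

Lemma pk_tr a b (e : a = b) (x : ps_car P a) : pk (ps_tr P e x) = pk x.
Proof. by case: b / e. Qed.

Lemma pk_ar a b (x : ps_car P a) (y : ps_car P b) : pk x = pk y -> a = b.
Proof. by move/(f_equal (@projT1 _ _)). Qed.

Lemma pk_trE a b (e : a = b) (x : ps_car P a) y : pk x = pk y -> ps_tr P e x = y.
Proof. by move=> H; apply: pk_inj; rewrite pk_tr. Qed.

Lemma pk_comp i a a' b b' (x : ps_car P a) (x' : ps_car P a') (y : ps_car P b) (y' : ps_car P b') :
  pk x = pk x' -> pk y = pk y' -> pk (ps_comp P i x y) = pk (ps_comp P i x' y').
Proof.
move=> H1 H2; have ea := pk_ar H1; have eb := pk_ar H2.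
case: a' / ea x' H1 => x' /pk_inj ->.
by case: b' / eb y' H2 => y' /pk_inj ->.
Qed.

Lemma pk_compl i a a' b (x : ps_car P a) (x' : ps_car P a') (y : ps_car P b) :
  pk x = pk x' -> pk (ps_comp P i x y) = pk (ps_comp P i x' y).
Proof. by move=> H; apply: pk_comp. Qed.

Lemma pk_compr i a b b' (x : ps_car P a) (y : ps_car P b) (y' : ps_car P b') :
  pk y = pk y' -> pk (ps_comp P i x y) = pk (ps_comp P i x y').
Proof. by move=> H; apply: pk_comp. Qed.

Lemma pk_lin a a' (c : K) (x y : ps_car P a) (x' y' : ps_car P a') :
  pk x = pk x' -> pk y = pk y' -> pk (c *: x + y) = pk (c *: x' + y').
Proof.
move=> H1 H2; have ea := pk_ar H1.
case: a' / ea x' y' H1 H2 => x' y' /pk_inj -> /pk_inj -> //.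
Qed.

Lemma pk_add a a' (x y : ps_car P a) (x' y' : ps_car P a') :
  pk x = pk x' -> pk y = pk y' -> pk (x + y) = pk (x' + y').
Proof.
move=> H1 H2; have ea := pk_ar H1.
case: a' / ea x' y' H1 H2 => x' y' /pk_inj -> /pk_inj -> //.
Qed.

Lemma pk_sum (T : Type) (s : seq T) a a' (F : T -> ps_car P a) (F' : T -> ps_car P a') :
  a = a' -> (forall t, pk (F t) = pk (F' t)) ->
  pk (\sum_(t <- s) F t) = pk (\sum_(t <- s) F' t).
Proof.
move=> ea; case: a' / ea F' => F' H.
by congr pk; apply: eq_bigr => t _; apply: pk_inj.
Qed.

End Gen.

End G1.
Import G1.

Module G2.
Set Implicit Arguments.
Unset Strict Implicit.
Unset Printing Implicit Defensive.
Import GRing.Theory.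
Local Open Scope ring_scope.

Definition images (i m c : nat) : seq nat :=
  if (c.+1 < i)%N then [:: c] else if c.+1 == i then iota c m.+1 else [:: (c + m)%N].
Fixpoint subr i m (r : seq nat) : seq (seq nat) :=
  if r is c :: r' then [seq rcons u' c' | c' <- images i m c, u' <- subr i m r'] else [:: [::]].
Definition subw i m u := subr i m (rev u).
Lemma subw_rcons i m u c :
  subw i m (rcons u c) = [seq rcons u' c' | c' <- images i m c, u' <- subw i m u].
Proof. by rewrite /subw rev_rcons. Qed.
Lemma subw_nil i m : subw i m [::] = [:: [::]]. Proof. by []. Qed.

Section Gen2.
Variable K : fieldType.
Variable P : preShuffle K.
Variables (d : ps_car P 1) (mu : ps_car P 2).
Hypothesis HP : is_preShuffle P.
Hypothesis HR : PerAsDer_rel P d mu.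

Local Notation car := (ps_car P).
Local Notation comp := (ps_comp P).
Local Notation pk := (@pk _ P _).

Lemma compl_add m n i (x1 x2 : car m) (y : car n) : (0 < n)%N -> (1 <= i <= m)%N ->
  comp i (x1 + x2) y = comp i x1 y + comp i x2 y.
Proof. by case: HP => H _ _ _ _ hn hi; have := H m n i hn hi 1 x1 x2 y; rewrite !scale1r. Qed.

Lemma compl0 m n i (y : car n) : (0 < n)%N -> (1 <= i <= m)%N -> comp i (0 : car m) y = 0.
Proof.
case: HP => H _ _ _ _ hn hi; have := H m n i hn hi (-1) 0 0 y.
by rewrite scaler0 addr0 scaleN1r addNr.
Qed.

Lemma complZ m n i (c : K) (x : car m) (y : car n) : (0 < n)%N -> (1 <= i <= m)%N ->
  comp i (c *: x) y = c *: comp i x y.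
Proof.
case: HP => H _ _ _ _ hn hi; have := H m n i hn hi c x 0 y.
by rewrite addr0 compl0 // addr0.
Qed.

Lemma compl_sum (T : Type) (s : seq T) m n i (F : T -> car m) (y : car n) :
  (0 < n)%N -> (1 <= i <= m)%N ->
  comp i (\sum_(t <- s) F t) y = \sum_(t <- s) comp i (F t) y.
Proof.
move=> hn hi.
by apply: (big_morph (fun x => comp i x y)) => [x1 x2|]; [apply: compl_add | apply: compl0].
Qed.

Lemma compr_add m n i (x : car m) (y1 y2 : car n) : (0 < n)%N -> (1 <= i <= m)%N ->
  comp i x (y1 + y2) = comp i x y1 + comp i x y2.
Proof. by case: HP => _ H _ _ _ hn hi; have := H m n i hn hi 1 x y1 y2; rewrite !scale1r. Qed.

Lemma compr0 m n i (x : car m) : (0 < n)%N -> (1 <= i <= m)%N -> comp i x (0 : car n) = 0.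
Proof.
case: HP => _ H _ _ _ hn hi; have := H m n i hn hi (-1) x 0 0.
by rewrite scaler0 addr0 scaleN1r addNr.
Qed.

Lemma comprZ m n i (c : K) (x : car m) (y : car n) : (0 < n)%N -> (1 <= i <= m)%N ->
  comp i x (c *: y) = c *: comp i x y.
Proof.
case: HP => _ H _ _ _ hn hi; have := H m n i hn hi c x y 0.
by rewrite addr0 compr0 // addr0.
Qed.

Lemma compr_sum (T : Type) (s : seq T) m n i (x : car m) (F : T -> car n) :
  (0 < n)%N -> (1 <= i <= m)%N ->
  comp i x (\sum_(t <- s) F t) = \sum_(t <- s) comp i x (F t).
Proof.
move=> hn hi.
by apply: (big_morph (fun y => comp i x y)) => [y1 y2|]; [apply: compr_add | apply: compr0].
Qed.

Lemma assocP l m n i j k (x : car l) (y : car m) (z : car n) :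
  (0 < n)%N -> (1 <= i <= l)%N -> (1 <= j <= m)%N -> k = (i.-1 + j)%N ->
  pk (comp k (comp i x y) z) = pk (comp i x (comp j y z)).
Proof.
move=> hn hi hj ->.
have e : (l + (m + n).-1).-1 = ((l + m).-1 + n).-1 by lia.
by case: HP => _ _ H _ _; rewrite (H l m n i j hn hi hj x y z e) pk_tr.
Qed.

Lemma unitlP n (x : car n.+1) : pk (comp 1 (ps_id P) x) = pk x.
Proof. by case: HP => _ _ _ H _; rewrite H. Qed.

Lemma unitrP n i (x : car n) : (1 <= i <= n)%N -> pk (comp i x (ps_id P)) = pk x.
Proof.
move=> hi; have e : (n + 1).-1 = n by lia.
case: HP => _ _ _ _ H; have E := H n i x hi e.
by rewrite -[X in _ = pk X]E pk_tr.
Qed.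

Lemma rel3P k (A : car k) i j : (1 <= i)%N -> (i < j)%N -> (j <= k)%N ->
  pk (comp j (comp i A d) mu) = pk (comp i (comp j A mu) d).
Proof.
move=> h1 h2 h3; have e : ((k + 2).-1 + 1).-1 = ((k + 1).-1 + 2).-1 by lia.
by case: HR => _ _ H _; rewrite (H k A i j h1 h2 h3 e) pk_tr.
Qed.

Lemma rel4P k (A : car k) i j : (1 <= i)%N -> (i < j)%N -> (j <= k)%N ->
  pk (comp j.+1 (comp i A mu) d) = pk (comp i (comp j A d) mu).
Proof.
move=> h1 h2 h3; have e : ((k + 1).-1 + 2).-1 = ((k + 2).-1 + 1).-1 by lia.
by case: HR => _ _ _ H; rewrite (H k A i j h1 h2 h3 e) pk_tr.
Qed.

Local Notation M := (ps_mun P mu).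

Lemma compDP n j (a : car n) : pk (ps_compD P d j a) = pk (comp j a d).
Proof. by rewrite /ps_compD pk_tr. Qed.

Lemma LM0 b : pk (comp 2 mu (M b)) = pk (comp 1 mu (M b)).
Proof.
elim: b => [|b IH].
  by rewrite /= (unitrP (n:=2)) // (unitrP (n:=2)).
rewrite -(assocP (i:=2) (j:=1) (k:=2) mu mu (M b)) //.
case: HR => <- _ _ _.
rewrite (assocP (i:=1) (j:=2) mu mu (M b)) //.
exact: pk_compr.
Qed.

Lemma LM a b i : (1 <= i <= a.+1)%N -> pk (comp i (M a) (M b)) = pk (M (a + b)).
Proof.
elim: a i => [|a IH] i hi.
  have -> : i = 1%N by lia.
  by rewrite /= unitlP.
have [->|hi2] := eqVneq i 1%N.
  rewrite (assocP (i:=1) (j:=1) mu (M a) (M b)) //.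
  by apply: pk_compr; apply: IH.
rewrite (pk_compl _ _ (esym (LM0 a))).
rewrite (assocP (i:=2) (j:=i.-1) mu (M a) (M b)) //; try lia.
rewrite (pk_compr _ _ (IH _ _)); last by lia.
by rewrite LM0.
Qed.


Lemma M0 : M 0 = ps_id P. Proof. by []. Qed.
Lemma MS m : M m.+1 = comp 1 mu (M m). Proof. by []. Qed.

Lemma L3 m : forall k (A : car k) i a, (1 <= i)%N -> (i < a)%N -> (a <= k)%N ->
  pk (comp i (comp a A d) (M m)) = pk (comp (a + m) (comp i A (M m)) d).
Proof.
elim: m => [|m IH] k A i a h1 h2 h3.
  rewrite M0 addn0 (unitrP (comp a A d)); last by lia.
  by apply: pk_compl; rewrite unitrP //; lia.
rewrite MS -(assocP (i:=i) (j:=1) (k:=i) (comp a A d) mu (M m)) //; try lia.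
rewrite (pk_compl i (M m) (esym (rel4P A h1 h2 h3))).
rewrite (IH _ (comp i A mu) i a.+1) //; try lia.
rewrite addSnnS; apply: pk_compl.
by rewrite (assocP (i:=i) (j:=1) (k:=i) A mu (M m)) //; lia.
Qed.

Lemma L2 m : forall k (A : car k) a j, (1 <= a)%N -> (a < j)%N -> (j <= k)%N ->
  pk (comp j (comp a A d) (M m)) = pk (comp a (comp j A (M m)) d).
Proof.
elim: m => [|m IH] k A a j h1 h2 h3.
  rewrite M0 (unitrP (comp a A d)); last by lia.
  by apply: pk_compl; rewrite unitrP //; lia.
rewrite MS -(assocP (i:=j) (j:=1) (k:=j) (comp a A d) mu (M m)) //; try lia.
rewrite (pk_compl j (M m) (rel3P A h1 h2 h3)).
rewrite (IH _ (comp j A mu) a j) //; try lia.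
apply: pk_compl.
by rewrite (assocP (i:=j) (j:=1) (k:=j) A mu (M m)) //; lia.
Qed.

Lemma L1 m : pk (comp 1 d (M m)) = pk (\sum_(t < m.+1) comp t.+1 (M m) d).
Proof.
elim: m => [|m IH].
  by rewrite big_ord1 M0 (unitrP d) // unitlP.
rewrite MS -(assocP (i:=1) (j:=1) (k:=1) d mu (M m)) //.
case: HR => _ -> _ _.
rewrite compl_add //.
rewrite big_ord_recr.
apply: pk_add.
  rewrite (assocP (i:=1) (j:=1) (k:=1) mu d (M m)) //.
  rewrite (pk_compr 1 mu IH) compr_sum //; try lia.
  apply: pk_sum; first by lia.
  move=> t; rewrite (assocP (i:=1) (j:=t.+1) (k:=t.+1) mu (M m) d) //.
  by move: (ltn_ord t); lia.
by rewrite (L3 m mu (i:=1) (a:=2)) // addnC.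
Qed.

Lemma L4 m k (A : car k) i : (1 <= i <= k)%N ->
  pk (comp i (comp i A d) (M m)) = pk (\sum_(t < m.+1) comp (i + t) (comp i A (M m)) d).
Proof.
move=> hi.
rewrite (assocP (i:=i) (j:=1) (k:=i) A d (M m)) //; last by lia.
rewrite (pk_compr i A (L1 m)) compr_sum //; try lia.
apply: pk_sum; first by lia.
move=> t; rewrite (assocP (i:=i) (j:=t.+1) (k:=i+t) A (M m) d) //; first by move: (ltn_ord t); lia.
by lia.
Qed.


Definition Fw n (u : seq nat) : car n.+1 := foldl (fun a c => ps_compD P d c.+1 a) (M n) u.
Lemma Fw_rcons n u c : Fw n (rcons u c) = ps_compD P d c.+1 (Fw n u).
Proof. by rewrite /Fw foldl_rcons. Qed.
Lemma Fw_nil n : Fw n [::] = M n. Proof. by []. Qed.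

Lemma sum_iota (V : zmodType) c m (G : nat -> V) :
  \sum_(c' <- iota c m) G c' = \sum_(t < m) G (c + t)%N.
Proof.
rewrite -{1}[c]addn0 iotaDl big_map -(big_mkord xpredT (fun t => G (c + t)%N)).
by rewrite /index_iota subn0.
Qed.

Lemma KL n m i u : all (fun c => c < n.+1)%N u -> (1 <= i <= n.+1)%N ->
  pk (comp i (Fw n u) (M m)) = pk (\sum_(u' <- subw i m u) Fw (n + m) u').
Proof.
move=> + hi; elim/last_ind: u => [_|u c IH].
  by rewrite Fw_nil subw_nil big_seq1 LM.
rewrite all_rcons => /andP[hc hu].
rewrite Fw_rcons (pk_compl i (M m) (compDP _ _)) subw_rcons big_allpairs_dep /images.
have [hlt|hge] := ltnP c.+1 i.
  rewrite big_seq1 (L2 m (Fw n u) (a:=c.+1) (j:=i)) //; try lia.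
  rewrite (pk_compl c.+1 d (IH hu)) compl_sum //; try lia.
  apply: pk_sum; first by lia.
  by move=> u'; rewrite Fw_rcons compDP.
have [eci|neci] := eqVneq c.+1 i.
  rewrite -eci (L4 m (Fw n u)) //; try lia.
  rewrite sum_iota; apply: pk_sum; first by lia.
  move=> t; rewrite -eci in IH; rewrite (pk_compl _ d (IH hu)) compl_sum //; try (move: (ltn_ord t); lia).
  apply: pk_sum; first by lia.
  by move=> u'; rewrite Fw_rcons compDP (addSn c t).
rewrite big_seq1 (L3 m (Fw n u) (i:=i) (a:=c.+1)) //; try lia.
rewrite (pk_compl _ d (IH hu)) compl_sum //; try lia.
apply: pk_sum; first by lia.
by move=> u'; rewrite Fw_rcons compDP (addSn c m).
Qed.

Lemma K2 n m i u v : all (fun c => c < n.+1)%N u -> all (fun c => c < m.+1)%N v ->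
  (1 <= i <= n.+1)%N ->
  pk (comp i (Fw n u) (Fw m v))
  = pk (\sum_(u' <- subw i m u) Fw (n + m) (u' ++ map (addn i.-1) v)).
Proof.
move=> hu + hi; elim/last_ind: v => [_|v c IH].
  rewrite Fw_nil KL //; apply: pk_sum => // u'.
  by rewrite cats0.
rewrite all_rcons => /andP[hc hv].
rewrite Fw_rcons (pk_compr i (Fw n u) (compDP _ _)).
rewrite -(assocP (i:=i) (j:=c.+1) (k:=i.-1 + c.+1) (Fw n u) (Fw m v) d) //; try lia.
rewrite (pk_compl _ d (IH hv)) compl_sum //; try lia.
apply: pk_sum; first by lia.
move=> u'; rewrite map_rcons -rcons_cat Fw_rcons compDP (addnS i.-1 c) //.
Qed.

End Gen2.

End G2.
Import G2.

Module R1.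
Set Implicit Arguments.
Unset Strict Implicit.
Unset Printing Implicit Defensive.
Import GRing.Theory.
Local Open Scope ring_scope.

Section R1.
Variable K : fieldType.
Local Notation R := (RAlg K).
Local Notation mono := (ncmono K).

Lemma valDZ n (a : K) (x y : ncpoly K n) w : val (a *: x + y) w = a * val x w + val y w.
Proof. by []. Qed.
Lemma valD n (x y : ncpoly K n) w : val (x + y) w = val x w + val y w.
Proof. by []. Qed.
Lemma valZ n (a : K) (x : ncpoly K n) w : val (a *: x) w = a * val x w.
Proof. by []. Qed.
Lemma val0 n w : val (0 : ncpoly K n) w = 0.
Proof. by []. Qed.
Lemma valRcomp n m i (p : Rcar K n) (q : Rcar K m) :
  val (Rcomp i p q) = rawcomp n m i (val p) (val q).
Proof. by []. Qed.
Lemma valtr a b (e : a = b) (x : ps_car R a) :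
  val (ps_tr R e x : Rcar K b) = val (x : Rcar K a).
Proof. by case: b / e. Qed.
Lemma valRone n : val (Rone K n) = mono [::]. Proof. by []. Qed.
Lemma valRx1 : val (Rx1 K) = mono [:: 0%N]. Proof. by []. Qed.

Lemma supp n (x : ncpoly K n) w : ~~ all (fun j => j < n)%N w -> val x w = 0.
Proof.
move=> h; have /asboolP [N H] := valP x.
by apply/eqP/negPn/negP => /H /andP [_ hw]; rewrite hw in h.
Qed.

Lemma all_ltW a b (w : seq nat) : (a <= b)%N -> all (fun j => j < a)%N w -> all (fun j => j < b)%N w.
Proof. by move=> hab; apply: sub_all => j /= hj; apply: leq_trans hab. Qed.

Lemma monoE v w : mono v w = (w == v)%:R. Proof. by []. Qed.

Lemma rawcomp_mono n m i p v w :
  rawcomp n m i p (mono v) w =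
  if all (fun j => j < (n + m).-1)%N w && (size v <= size w)%N then
    p (map (rc_phi m i) (take (size w - size v) w)) *
    (if all (rc_inrange m i) (drop (size w - size v) w)
     then (map (rc_psi i) (drop (size w - size v) w) == v)%:R else 0)
  else 0.
Proof.
rewrite /rawcomp; case: ifP => hg //=.
have hterm : forall k, (k <= size w)%N -> (size w - k)%N <> size v ->
   p (map (rc_phi m i) (take k w)) *
   (if all (rc_inrange m i) (drop k w) then mono v (map (rc_psi i) (drop k w)) else 0) = 0.
  move=> k hk hne; case: ifP => _; last by rewrite mulr0.
  rewrite monoE; case: eqP => [he|]; last by rewrite mulr0.
  by have hs := congr1 (@size nat) he; rewrite size_map size_drop in hs.
case: leqP => hv.
  pose k0 : 'I_(size w).+1 := Ordinal (leq_ltn_trans (leq_subr (size v) (size w)) (ltnSn _)).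
  rewrite (bigD1 k0) //= big1 ?addr0 // => k hk.
  apply: hterm; first by rewrite -ltnS.
  move=> he; move: hk; rewrite -(inj_eq val_inj) /=; move/eqP; apply.
  move: (ltn_ord k); lia.
rewrite big1 // => k _; apply: hterm; first by rewrite -ltnS.
by lia.
Qed.

Lemma rc_phi1 i j : rc_phi 1 i j = j.
Proof. by rewrite /rc_phi; repeat case: ifP; lia. Qed.

Lemma map_rc_phi1 i w : map (rc_phi 1 i) w = w.
Proof. by rewrite (eq_map (rc_phi1 i)) map_id. Qed.

Lemma compone n m i (x : Rcar K n) w : (1 <= i <= n)%N -> (0 < m)%N ->
  val (Rcomp i x (Rone K m)) w = val x (map (rc_phi m i) w).
Proof.
move=> hi hm; rewrite valRcomp valRone rawcomp_mono /= leq0n andbT subn0 take_size drop_size /=.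
case: ifP => hg; first by rewrite mulr1.
symmetry; apply: supp; apply: contra (negbT hg) => h.
apply/allP => c hc; have := allP h _ (map_f (rc_phi m i) hc).
by rewrite /rc_phi; repeat case: ifP; lia.
Qed.

Lemma compx1_nil n i (x : Rcar K n) : val (Rcomp i x (Rx1 K)) [::] = 0.
Proof. by rewrite valRcomp valRx1 rawcomp_mono. Qed.

Lemma compx1_rcons n i (x : Rcar K n) w c : (1 <= i <= n)%N ->
  val (Rcomp i x (Rx1 K)) (rcons w c) = (c == i.-1)%:R * val x w.
Proof.
move=> hi; rewrite valRcomp valRx1 rawcomp_mono /= size_rcons ltn0Sn andbT subn1 /=.
rewrite -cats1 take_size_cat // drop_size_cat //= map_rc_phi1 andbT.
have -> : (n + 1).-1 = n by lia.
rewrite all_cat /= andbT /rc_inrange /rc_psi.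
case: (eqVneq c i.-1) => [->|hc].
  rewrite leqnn addn1 ltnSn subnn /= mulr1 mul1r.
  case: ifP => // hw; symmetry; apply: supp; apply/negP => h; rewrite h /= in hw; lia.
rewrite mul0r; case: ifP => _ //.
by case: ifP; [lia | rewrite mulr0].
Qed.

Lemma comp1l n m (q : Rcar K n) w : (0 < m)%N -> val (Rcomp 1 (Rone K m) q) w = val q w.
Proof.
move=> hm; rewrite valRcomp valRone /rawcomp.
case: ifP => hg.
  rewrite big_ord_recl big1 ?addr0.
    rewrite monoE /= take0 drop0 /= mul1r.
    have -> : map (rc_psi 1) w = w by rewrite /rc_psi (eq_map (fun j => subn0 j)) map_id.
    case: ifP => // ha; symmetry; apply: supp; apply: contra (negbT ha) => h.
    by apply: sub_all h => j /=; rewrite /rc_inrange; lia.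
  move=> k _; rewrite monoE /=; case: eqP; last by rewrite mul0r.
  move/(congr1 size); rewrite size_map size_take /=.
  rewrite /bump /= => H; exfalso; move: H (ltn_ord k); case: ltnP; lia.
symmetry; apply: supp; apply: contra (negbT hg); apply: all_ltW; lia.
Qed.

End R1.

End R1.
Import R1.

Module R2.
Set Implicit Arguments.
Unset Strict Implicit.
Unset Printing Implicit Defensive.
Import GRing.Theory.
Local Open Scope ring_scope.

Section R2.
Variable K : fieldType.
Local Notation R := (RAlg K).
Local Notation mono := (ncmono K).

Lemma ncpoly_ext n (x y : ncpoly K n) : (forall w, val x w = val y w) -> x = y.
Proof. by move=> H; apply: val_inj; apply: functional_extensionality. Qed.

Lemma Runit_l n (x : ps_car R n.+1) : ps_comp R 1 (ps_id R) x = x.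
Proof. by apply: ncpoly_ext => w; rewrite comp1l. Qed.

Lemma Runit_r n i (x : ps_car R n) (e : (n + 1).-1 = n) : (1 <= i <= n)%N ->
  ps_tr R e (ps_comp R i x (ps_id R)) = x.
Proof.
by move=> hi; apply: ncpoly_ext => w; rewrite valtr compone // map_rc_phi1.
Qed.

Lemma Rlin1 m n i (a : K) (x1 x2 : ps_car R m) (y : ps_car R n) :
  ps_comp R i (a *: x1 + x2) y = a *: ps_comp R i x1 y + ps_comp R i x2 y.
Proof.
apply: ncpoly_ext => w; rewrite valDZ !valRcomp /rawcomp.
case: ifP => _; last by rewrite mulr0 addr0.
rewrite mulr_sumr -big_split; apply: eq_bigr => k _.
by rewrite valDZ mulrDl mulrA.
Qed.

Lemma Rlin2 m n i (a : K) (x : ps_car R m) (y1 y2 : ps_car R n) :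
  ps_comp R i x (a *: y1 + y2) = a *: ps_comp R i x y1 + ps_comp R i x y2.
Proof.
apply: ncpoly_ext => w; rewrite valDZ !valRcomp /rawcomp.
case: ifP => _; last by rewrite mulr0 addr0.
rewrite mulr_sumr -big_split; apply: eq_bigr => k _.
case: ifP => _; last by rewrite !mulr0 /= addr0.
by rewrite valDZ mulrDr mulrCA.
Qed.

Lemma phi21 c : (rc_phi 2 1 c == 0%N) = (c < 2)%N.
Proof. by rewrite /rc_phi; apply/idP/idP; repeat case: ifP; lia. Qed.

Lemma phi2j i j c : (1 <= i)%N -> (i < j)%N -> (rc_phi 2 j c == i.-1) = (c == i.-1).
Proof. by move=> h1 h2; rewrite /rc_phi; apply/idP/idP; repeat case: ifP; lia. Qed.

Lemma phi2i i j c : (1 <= i)%N -> (i < j)%N -> (rc_phi 2 i c == j.-1) = (c == j).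
Proof. by move=> h1 h2; rewrite /rc_phi; apply/idP/idP; repeat case: ifP; lia. Qed.

Lemma map_nil_eq (f : nat -> nat) w : (map f w == [::]) = (w == [::]).
Proof. by case: w. Qed.

Lemma Rrel : PerAsDer_rel R (Rx1 K) (Rone K 2).
Proof.
split.
- apply: ncpoly_ext => w; rewrite comp1l // compone // valRone !monoE.
  by rewrite map_nil_eq.
- apply: ncpoly_ext => w; rewrite valD compone // valRx1 monoE.
  elim/last_ind: w => [|w c _]; first by rewrite (compx1_nil 1 (Rone K 2)) (compx1_nil 2 (Rone K 2)) addr0.
  rewrite (compx1_rcons (i:=1) (Rone K 2)) // (compx1_rcons (i:=2) (Rone K 2)) // valRone !monoE map_rcons.
  rewrite -[[:: 0%N]]/(rcons [::] 0%N) eqseq_rcons map_nil_eq phi21.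
  case: (w == [::]); rewrite ?mulr1 ?mulr0 ?addr0 ?andbF ?andbT //.
  by case: c => [|[|c]] //=; rewrite ?addr0 ?add0r.
- move=> k a i j h1 h2 h3 e; apply: ncpoly_ext => w; rewrite valtr.
  rewrite (compone (i:=j) (ps_comp R i a (Rx1 K))); try lia.
  elim/last_ind: w => [|w c _]; first by rewrite (compx1_nil i a) (compx1_nil i (ps_comp R j a (Rone K 2))).
  rewrite map_rcons (compx1_rcons (i:=i) a) ?(compx1_rcons (i:=i) (ps_comp R j a (Rone K 2))); try lia.
  by rewrite (compone (i:=j) a) ?phi2j //; lia.
- move=> k a i j h1 h2 h3 e; apply: ncpoly_ext => w; rewrite valtr.
  rewrite (compone (i:=i) (ps_comp R j a (Rx1 K))); try lia.
  elim/last_ind: w => [|w c _].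
    by rewrite (compx1_nil j.+1 (ps_comp R i a (Rone K 2))) (compx1_nil j a).
  rewrite map_rcons (compx1_rcons (i:=j) a) ?(compx1_rcons (i:=j.+1) (ps_comp R i a (Rone K 2))); try lia.
  by rewrite (compone (i:=i) a) ?phi2i //; lia.
Qed.

Lemma Mval n w : val (ps_mun R (Rone K 2) n : Rcar K n.+1) w = (w == [::])%:R.
Proof.
elim: n w => [|n IH] w; first by rewrite /= monoE.
by rewrite -(IH w); exact: (comp1l (m:=2) (ps_mun R (Rone K 2) n)).
Qed.

Lemma clause4 n s : all (fun j => 0 < j <= n.+1)%N s -> forall w,
  val (foldl (fun a j => ps_compD R (Rx1 K) j a) (ps_mun R (Rone K 2) n) s : Rcar K n.+1) w
  = (w == map predn s)%:R.
Proof.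
elim/last_ind: s => [_|s j IH]; first by move=> w; rewrite Mval.
rewrite all_rcons => /andP[hj hs] w.
rewrite foldl_rcons /ps_compD valtr.
set a := foldl _ _ s.
elim/last_ind: w => [|w c _].
  rewrite (compx1_nil j a) map_rcons; by case: (map _ _).
rewrite (compx1_rcons (i:=j) a) // IH // map_rcons eqseq_rcons.
by case: eqP; case: eqP; rewrite ?mulr1 ?mulr0 ?mul1r ?mul0r.
Qed.

End R2.

End R2.
Import R2.

Module R3a.
Set Implicit Arguments.
Unset Strict Implicit.
Unset Printing Implicit Defensive.

Section Letters.
Variables (l m n i j : nat).
Hypotheses (hi : (1 <= i <= l)%N) (hj : (1 <= j <= m)%N) (hn : (0 < n)%N).

Lemma f1 c : rc_phi m i (rc_phi n (i.-1 + j) c) = rc_phi (m + n).-1 i c.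
Proof. by rewrite /rc_phi; repeat case: ifP; lia. Qed.

Lemma f2 c : rc_inrange m i (rc_phi n (i.-1 + j) c) = rc_inrange (m + n).-1 i c.
Proof. by rewrite /rc_phi /rc_inrange; apply/idP/idP; repeat case: ifP; lia. Qed.

Lemma f3 c : rc_inrange (m + n).-1 i c ->
  rc_psi i (rc_phi n (i.-1 + j) c) = rc_phi n j (rc_psi i c).
Proof. by rewrite /rc_phi /rc_inrange /rc_psi; repeat case: ifP; lia. Qed.

Lemma f4 c : rc_inrange n (i.-1 + j) c = rc_inrange (m + n).-1 i c && rc_inrange n j (rc_psi i c).
Proof. by rewrite /rc_inrange /rc_psi; apply/idP/idP; lia. Qed.

Lemma f5 c : rc_psi (i.-1 + j) c = rc_psi j (rc_psi i c).
Proof. by rewrite /rc_psi; lia. Qed.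

Lemma f6 : ((l + m).-1 + n).-1 = (l + (m + n).-1).-1.
Proof. by lia. Qed.

Lemma f7 c : (c < ((l + m).-1 + n).-1)%N -> (rc_phi n (i.-1 + j) c < (l + m).-1)%N.
Proof. by rewrite /rc_phi; repeat case: ifP; lia. Qed.

Lemma f8 c : rc_inrange (m + n).-1 i c -> (rc_psi i c < (m + n).-1)%N.
Proof. by rewrite /rc_inrange /rc_psi; lia. Qed.

End Letters.

End R3a.
Import R3a.

Module R3.
Set Implicit Arguments.
Unset Strict Implicit.
Unset Printing Implicit Defensive.
Import GRing.Theory.
Local Open Scope ring_scope.

Lemma tri (V : zmodType) s (F : nat -> nat -> V) :
  \sum_(0 <= k < s.+1) \sum_(0 <= k' < k.+1) F k' k =
  \sum_(0 <= k' < s.+1) \sum_(0 <= t < (s - k').+1) F k' (k' + t)%N.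
Proof.
elim: s => [|s IH]; first by rewrite !big_nat1 addn0.
rewrite big_nat_recr //= IH [in RHS]big_nat_recr //= subnn big_nat1 addn0.
rewrite [in RHS](eq_big_nat _ _ (F2 := fun k' => \sum_(0 <= t < (s - k').+1) F k' (k' + t)%N
   + F k' s.+1)); last first.
  move=> k' /andP[_ hk']; rewrite subSn // big_nat_recr //=.
  by congr (_ + F k' _); lia.
by rewrite big_split /= -addrA -big_nat_recr.
Qed.

Section Assoc.
Variable K : fieldType.
Variables (l m n i j : nat).
Hypotheses (hi : (1 <= i <= l)%N) (hj : (1 <= j <= m)%N) (hn : (0 < n)%N).
Variables (X Y Z : ncfun K) (w : seq nat).

Local Notation phi2 := (rc_phi n (i.-1 + j)).
Local Notation in2 := (rc_inrange n (i.-1 + j)).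
Local Notation psi2 := (rc_psi (i.-1 + j)).
Local Notation phi1 := (rc_phi m i).
Local Notation in1 := (rc_inrange m i).
Local Notation psi1 := (rc_psi i).
Local Notation phi1' := (rc_phi (m + n).-1 i).
Local Notation in1' := (rc_inrange (m + n).-1 i).
Local Notation phi'' := (rc_phi n j).
Local Notation in'' := (rc_inrange n j).
Local Notation psi'' := (rc_psi j).

Definition TL k' k :=
  X (map phi1' (take k' w)) *
  (if all in1' (take (k - k') (drop k' w))
   then Y (map (psi1 \o phi2) (take (k - k') (drop k' w))) else 0) *
  (if all in2 (drop k w) then Z (map psi2 (drop k w)) else 0).

Definition TR k' t :=
  if all in1' (drop k' w) then
    X (map phi1' (take k' w)) *
    (Y (map phi'' (take t (map psi1 (drop k' w)))) *
     (if all in'' (drop t (map psi1 (drop k' w)))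
      then Z (map psi'' (drop t (map psi1 (drop k' w)))) else 0))
  else 0.

Hypothesis hg : all (fun c => c < ((l + m).-1 + n).-1)%N w.

Lemma inner_left k : (k <= size w)%N ->
  rawcomp l m i X Y (map phi2 (take k w)) *
  (if all in2 (drop k w) then Z (map psi2 (drop k w)) else 0)
  = \sum_(0 <= k' < k.+1) TL k' k.
Proof.
move=> hk; rewrite /rawcomp.
have -> : all (fun c => c < (l + m).-1)%N (map phi2 (take k w)).
  apply/allP => c /mapP [c' hc' ->]; apply: (f7 hi hj hn).
  exact: (allP hg) c' (mem_take hc').
rewrite size_map size_takel // mulr_suml big_mkord.
apply: eq_bigr => k' _; have hk' := ltn_ord k'.
rewrite /TL -map_take take_takel; last by lia.
rewrite -map_drop.
have -> : drop k' (take k w) = take (k - k') (drop k' w) by rewrite take_drop subnK.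
rewrite -map_comp (eq_map (f1 hi hj hn)) all_map (eq_all (f2 hi hj hn)).
by rewrite -map_comp.
Qed.

Lemma inner_right k' : (k' <= size w)%N ->
  X (map phi1' (take k' w)) *
  (if all in1' (drop k' w) then rawcomp m n j Y Z (map psi1 (drop k' w)) else 0)
  = \sum_(0 <= t < (size w - k').+1) TR k' t.
Proof.
move=> hk'; rewrite /TR; case: ifP => hb; last first.
  by rewrite mulr0 big1.
rewrite /rawcomp.
have -> : all (fun c => c < (m + n).-1)%N (map psi1 (drop k' w)).
  by apply/allP => c /mapP [c' hc' ->]; apply: (f8 hi hj hn); exact: (allP hb) c' hc'.
rewrite size_map size_drop mulr_sumr big_mkord.
by apply: eq_bigr => t _.
Qed.

Lemma TLR k' t : (k' + t <= size w)%N -> TL k' (k' + t) = TR k' t.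
Proof.
move=> h; rewrite /TL /TR addKn.
have Ed : drop (k' + t) w = drop t (drop k' w) by rewrite drop_drop (addnC t).
rewrite Ed -map_take -map_drop.
set b := take t (drop k' w); set cs := drop t (drop k' w).
have Eb : drop k' w = b ++ cs by rewrite cat_take_drop.
rewrite Eb all_cat.
have E4 : all in2 cs = all in1' cs && all in'' (map psi1 cs).
  by rewrite all_map -all_predI; apply: eq_all => c; rewrite /= (f4 hi hj hn).
have E5 : map psi2 cs = map psi'' (map psi1 cs).
  by rewrite -map_comp; apply: eq_map => c; rewrite /= (f5 hi hj hn).
rewrite E4 E5.
case hb: (all in1' b); last by rewrite /= mulr0 mul0r.
case hc: (all in1' cs); last by rewrite /= mulr0.
rewrite /= -mulrA; congr (_ * (Y _ * _)).
rewrite -map_comp; apply/eq_in_map => c hcb /=.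
by rewrite (f3 hi hj hn) //; exact: (allP hb) c hcb.
Qed.

Lemma rawassoc :
  rawcomp (l + m).-1 n (i.-1 + j) (rawcomp l m i X Y) Z w
  = rawcomp l (m + n).-1 i X (rawcomp m n j Y Z) w.
Proof.
have EL : rawcomp (l + m).-1 n (i.-1 + j) (rawcomp l m i X Y) Z w =
  \sum_(0 <= k < (size w).+1) rawcomp l m i X Y (map phi2 (take k w)) *
     (if all in2 (drop k w) then Z (map psi2 (drop k w)) else 0).
  by rewrite {1}/rawcomp hg big_mkord.
have ER : rawcomp l (m + n).-1 i X (rawcomp m n j Y Z) w =
  \sum_(0 <= k' < (size w).+1) X (map phi1' (take k' w)) *
     (if all in1' (drop k' w) then rawcomp m n j Y Z (map psi1 (drop k' w)) else 0).
  by rewrite {1}/rawcomp -(f6 hi hj hn) hg big_mkord.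
rewrite EL ER.
rewrite (eq_big_nat _ _ (F2 := fun k => \sum_(0 <= k' < k.+1) TL k' k)); last first.
  by move=> k /andP[_ hk]; apply: inner_left; lia.
rewrite tri.
apply: eq_big_nat => k' /andP[_ hk'].
rewrite inner_right; last by lia.
apply: eq_big_nat => t /andP[_ ht].
by apply: TLR; lia.
Qed.

End Assoc.

End R3.
Import R3.

Module R4.
Set Implicit Arguments.
Unset Strict Implicit.
Unset Printing Implicit Defensive.
Import GRing.Theory.
Local Open Scope ring_scope.

Lemma R_is_preShuffle (K : fieldType) : is_preShuffle (RAlg K).
Proof.
split.
- by move=> m n i _ _ a x1 x2 y; apply: Rlin1.
- by move=> m n i _ _ a x y1 y2; apply: Rlin2.
- move=> l m n i j hn hi hj x y z e; apply: ncpoly_ext => w; rewrite valtr.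
  transitivity (rawcomp (l + m).-1 n (i.-1 + j) (rawcomp l m i (val x) (val y)) (val z) w); first by [].
  transitivity (rawcomp l (m + n).-1 i (val x) (rawcomp m n j (val y) (val z)) w); last by [].
  case: (boolP (all (fun c => c < ((l + m).-1 + n).-1)%N w)) => hg.
    exact: rawassoc.
  by rewrite /rawcomp (negbTE hg) -(f6 hi hj hn) (negbTE hg).
- by move=> n x; apply: Runit_l.
- by move=> n i x hi e; apply: Runit_r.
Qed.

End R4.
Import R4.

Module U1.
Set Implicit Arguments.
Unset Strict Implicit.
Unset Printing Implicit Defensive.
Import GRing.Theory.
Local Open Scope ring_scope.

Fixpoint words (n N : nat) : seq (seq nat) :=
  if N is N'.+1 then [::] :: [seq c :: w | c <- iota 0 n, w <- words n N'] else [:: [::]].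

Lemma mem_words n N w : (w \in words n N) = (size w <= N)%N && all (fun j => j < n)%N w.
Proof.
elim: N w => [|N IH] [|c w] //=.
rewrite in_cons /=; apply/allpairsP/andP.
  case=> [[c' w'] /= [hc hw [ec ew]]]; subst c' w'.
  move: hw; rewrite IH => /andP[hs ha]; split => //; rewrite /= ha andbT.
  by move: hc; rewrite mem_iota add0n.
case=> hs /andP[hc ha]; exists (c, w) => /=; split => //.
  by rewrite mem_iota add0n.
by rewrite IH ha andbT -ltnS.
Qed.

Lemma uniq_words n N : uniq (words n N).
Proof.
elim: N => [|N IH] //=; rewrite allpairs_uniq ?iota_uniq ?andbT //.
  by apply/negP => /allpairsP [[? ?] [_ _ ?]].
by move=> [a b] [a' b'] _ _ /= [-> ->].
Qed.

Section U1.
Variable K : fieldType.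
Local Notation R := (RAlg K).

Definition bnd n (p : ncpoly K n) : nat :=
  proj1_sig (constructive_indefinite_description _ (elimT (asboolP _) (valP p))).

Lemma bndP n (p : ncpoly K n) w : val p w != 0 -> w \in words n (bnd p).
Proof.
rewrite /bnd; case: constructive_indefinite_description => N /= H /H.
by rewrite mem_words.
Qed.

Lemma sum_supp (V : zmodType) (s1 s2 : seq (seq nat)) (h : seq nat -> V) :
  uniq s1 -> uniq s2 -> (forall w, h w != 0 -> (w \in s1) && (w \in s2)) ->
  \sum_(w <- s1) h w = \sum_(w <- s2) h w.
Proof.
move=> u1 u2 H.
have sp (s : seq (seq nat)) : \sum_(w <- s) h w = \sum_(w <- s | h w != 0) h w.
  by rewrite [RHS]big_mkcond; apply: eq_bigr => w _; case: (h w =P 0) => [->|].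
rewrite (sp s1) (sp s2).
rewrite -[LHS]big_filter -[RHS]big_filter; apply: perm_big; apply: uniq_perm; [exact: filter_uniq | exact: filter_uniq |].
move=> w; rewrite !mem_filter; case: (boolP (h w != 0)) => //= hw.
by case/andP: (H w hw) => -> ->.
Qed.

Definition FwR n u : ps_car R n.+1 := @Fw K R (Rx1 K) (Rone K 2) n u.

Lemma FwR_val n u w : all (fun c => c < n.+1)%N u -> val (FwR n u : Rcar K n.+1) w = (w == u)%:R.
Proof.
move=> hu.
have H : all (fun j => 0 < j <= n.+1)%N (map S u) by rewrite all_map; apply: sub_all hu.
have E : map predn (map S u) = u by elim: (u) => //= a v ->.
have Fm : forall z : ps_car R n.+1, foldl (fun a j => ps_compD R (Rx1 K) j a) z (map S u)
   = foldl (fun a c => ps_compD R (Rx1 K) c.+1 a) z u.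
  by elim: (u) => //= a v IH z; rewrite IH.
have := @clause4 K n (map S u) H w; rewrite Fm E; exact.
Qed.

Lemma val_sum n (s : seq (seq nat)) (G : seq nat -> ncpoly K n) w :
  val (\sum_(u <- s) G u) w = \sum_(u <- s) val (G u) w.
Proof.
by apply: (big_morph (fun x : ncpoly K n => val x w)) => [x y|]; rewrite ?valD ?val0.
Qed.

Lemma decomp n (p : ncpoly K n.+1) N : (forall w, val p w != 0 -> w \in words n.+1 N) ->
  p = \sum_(u <- words n.+1 N) val p u *: (FwR n u : ncpoly K n.+1).
Proof.
move=> H; apply: ncpoly_ext => w; rewrite val_sum.
have E : \sum_(u <- words n.+1 N) val (val p u *: (FwR n u : ncpoly K n.+1)) w
       = \sum_(u <- words n.+1 N) (u == w)%:R * val p u.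
  apply: eq_big_seq => u; rewrite mem_words => /andP[_ hu].
  by rewrite valZ FwR_val // mulrC eq_sym.
rewrite E; case: (boolP (w \in words n.+1 N)) => hw.
  rewrite (bigD1_seq w) ?uniq_words //= eqxx mul1r big1 ?addr0 //.
  by move=> u hu; rewrite (negbTE hu) mul0r.
rewrite big1; last first.
  move=> u _; case: (eqVneq u w) => [->|hne]; last by rewrite mul0r.
  by rewrite mul1r; apply/eqP; apply: contraR hw => /H.
by apply/eqP; apply: contraR hw => /H.
Qed.

End U1.

End U1.
Import U1.

Module U2.
Set Implicit Arguments.
Unset Strict Implicit.
Unset Printing Implicit Defensive.
Import GRing.Theory.
Local Open Scope ring_scope.

Lemma fam_pk (K : fieldType) (Q1 Q2 : preShuffle K) (h : forall k, ps_car Q1 k -> ps_car Q2 k)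
  a b (x : ps_car Q1 a) (y : ps_car Q1 b) : pk x = pk y -> pk (h a x) = pk (h b y).
Proof.
move=> H; have e := pk_ar H; case: b / e y H => y /pk_inj -> //.
Qed.

Lemma comp_expand (K : fieldType) (Q : preShuffle K) (HQ : is_preShuffle Q) m n i :
  (0 < n)%N -> (1 <= i <= m)%N ->
  forall (s1 s2 : seq (seq nat)) (a b : seq nat -> K) (X : seq nat -> ps_car Q m)
    (Y : seq nat -> ps_car Q n),
  ps_comp Q i (\sum_(u <- s1) a u *: X u) (\sum_(v <- s2) b v *: Y v)
  = \sum_(u <- s1) a u *: \sum_(v <- s2) b v *: ps_comp Q i (X u) (Y v).
Proof.
move=> hn hi s1 s2 a b X Y.
rewrite (compl_sum HQ) //; apply: eq_bigr => u _.
rewrite (complZ HQ) // (compr_sum HQ) //; congr (_ *: _); apply: eq_bigr => v _.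
by rewrite (comprZ HQ).
Qed.

Lemma subw_letters m n i u : all (fun c => c < m.+1)%N u -> (1 <= i <= m.+1)%N ->
  forall u', u' \in subw i n u -> all (fun c => c < (m + n).+1)%N u'.
Proof.
move=> + hi; elim/last_ind: u => [_|u c IH].
  by move=> u'; rewrite subw_nil mem_seq1 => /eqP ->.
rewrite all_rcons => /andP[hc hu] u'; rewrite subw_rcons => /allpairsP [[c' u''] /= [hc' hu'' ->]].
rewrite all_rcons (IH hu _ hu'') andbT.
move: hc'; rewrite /images; case: ifP => h1; first by rewrite mem_seq1 => /eqP ->; lia.
case: ifP => h2; first by rewrite mem_iota; lia.
by rewrite mem_seq1 => /eqP ->; lia.
Qed.

Section U2.
Variable K : fieldType.
Variable P : preShuffle K.
Variables (d : ps_car P 1) (mu : ps_car P 2).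
Hypothesis HP : is_preShuffle P.
Hypothesis HR : PerAsDer_rel P d mu.
Local Notation R := (RAlg K).
Local Notation FwP := (@Fw K P d mu).
Local Notation RP := (R_is_preShuffle K).

Definition fP (k : nat) : ps_car R k -> ps_car P k :=
  match k with
  | 0 => fun _ => 0
  | n.+1 => fun p => \sum_(w <- words n.+1 (bnd (p : Rcar K n.+1)))
                       val (p : Rcar K n.+1) w *: FwP n w
  end.

Lemma fP_eq n (p : ps_car R n.+1) N : (forall w, val (p : Rcar K n.+1) w != 0 -> w \in words n.+1 N) ->
  fP p = \sum_(w <- words n.+1 N) val (p : Rcar K n.+1) w *: FwP n w.
Proof.
move=> H; apply: sum_supp; rewrite ?uniq_words // => w hw.
have hp : val (p : Rcar K n.+1) w != 0 by apply: contraNneq hw => ->; rewrite scale0r.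
by rewrite bndP // H.
Qed.

Lemma fP_lin k a (x y : ps_car R k) : fP (a *: x + y) = a *: fP x + fP y.
Proof.
case: k x y => [|n] x y; first by rewrite /= scaler0 addr0.
set N := maxn (bnd (x : Rcar K n.+1)) (maxn (bnd (y : Rcar K n.+1)) (bnd (a *: x + y : Rcar K n.+1))).
have HN : forall (q : Rcar K n.+1), (bnd q <= N)%N -> forall w, val q w != 0 -> w \in words n.+1 N.
  move=> q hq w /bndP; rewrite !mem_words => /andP[h1 ->]; rewrite andbT.
  exact: leq_trans hq.
rewrite (fP_eq (N := N) (p := a *: x + y)); last by apply: HN; rewrite /N; lia.
rewrite (fP_eq (N := N) (p := x)); last by apply: HN; rewrite /N; lia.
rewrite (fP_eq (N := N) (p := y)); last by apply: HN; rewrite /N; lia.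
rewrite scaler_sumr -big_split; apply: eq_bigr => w _.
by rewrite valDZ scalerDl scalerA.
Qed.

Lemma fP0 k : fP (0 : ps_car R k) = 0.
Proof.
have := fP_lin (-1) (0 : ps_car R k) 0.
by rewrite scaler0 addr0 scaleN1r addNr.
Qed.

Lemma fP_add k (x y : ps_car R k) : fP (x + y) = fP x + fP y.
Proof. by have := fP_lin 1 x y; rewrite !scale1r. Qed.

Lemma fP_scale k a (x : ps_car R k) : fP (a *: x) = a *: fP x.
Proof. by have := fP_lin a x 0; rewrite !addr0 fP0 addr0. Qed.

Lemma fP_lsum k (s : seq (seq nat)) (c : seq nat -> K) (z : seq nat -> ps_car R k) :
  fP (\sum_(t <- s) c t *: z t) = \sum_(t <- s) c t *: fP (z t).
Proof.
rewrite (big_morph (@fP k) (@fP_add k) (fP0 k)).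
by apply: eq_bigr => t _; rewrite fP_scale.
Qed.

Lemma fP_sum k (s : seq (seq nat)) (z : seq nat -> ps_car R k) :
  fP (\sum_(t <- s) z t) = \sum_(t <- s) fP (z t).
Proof. exact: (big_morph (@fP k) (@fP_add k) (fP0 k)). Qed.

Lemma fFw n u : all (fun c => c < n.+1)%N u -> fP (FwR K n u) = FwP n u.
Proof.
move=> hu; rewrite (fP_eq (N := size u)); last first.
  move=> w; rewrite FwR_val //; case: (eqVneq w u) => [->|_]; first by rewrite mem_words leqnn hu.
  by rewrite /= eqxx.
rewrite (bigD1_seq u) ?uniq_words ?mem_words ?leqnn ?hu //= FwR_val // eqxx scale1r.
rewrite big1 ?addr0 // => w hw; rewrite FwR_val //.
by rewrite (negbTE hw) scale0r.
Qed.

Lemma fP_basis m n i u v : all (fun c => c < m.+1)%N u -> all (fun c => c < n.+1)%N v ->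
  (1 <= i <= m.+1)%N ->
  fP (ps_comp R i (FwR K m u) (FwR K n v)) = ps_comp P i (FwP m u) (FwP n v).
Proof.
move=> hu hv hi; apply: pk_inj.
have E1 := K2 RP (Rrel K) hu hv hi.
rewrite (fam_pk fP E1) fP_sum (K2 HP HR hu hv hi).
congr pk; apply: eq_big_seq => u' hu'.
apply: fFw; rewrite all_cat (subw_letters hu hi hu') /= all_map.
by apply: sub_all hv => c /=; lia.
Qed.

Lemma fP_morph m n i (x : ps_car R m) (y : ps_car R n) : (0 < n)%N -> (1 <= i <= m)%N ->
  fP (ps_comp R i x y) = ps_comp P i (fP x) (fP y).
Proof.
case: m x => [|m] x; first by lia.
case: n y => [|n] y; first by lia.
move=> hn hi.
rewrite (decomp (@bndP K m.+1 x)) (decomp (@bndP K n.+1 y)).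
rewrite (comp_expand RP) // fP_lsum !fP_lsum (comp_expand HP) //.
apply: eq_big_seq => u; rewrite mem_words => /andP[_ hu]; congr (_ *: _).
rewrite fP_lsum; apply: eq_big_seq => v; rewrite mem_words => /andP[_ hv]; congr (_ *: _).
by rewrite fP_basis // !fFw.
Qed.

End U2.

End U2.
Import U2.

Module U3.
Set Implicit Arguments.
Unset Strict Implicit.
Unset Printing Implicit Defensive.
Import GRing.Theory.
Local Open Scope ring_scope.

Section U3.
Variable K : fieldType.
Variable P : preShuffle K.
Variables (d : ps_car P 1) (mu : ps_car P 2).
Hypothesis HP : is_preShuffle P.
Hypothesis HR : PerAsDer_rel P d mu.
Local Notation R := (RAlg K).
Local Notation FwP := (@Fw K P d mu).


Lemma lin_lsum (h : forall k, ps_car R k -> ps_car P k) k :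
  (forall (a : K) (x y : ps_car R k), h k (a *: x + y) = a *: h k x + h k y) ->
  forall (s : seq (seq nat)) (c : seq nat -> K) (z : seq nat -> ps_car R k),
  h k (\sum_(t <- s) c t *: z t) = \sum_(t <- s) c t *: h k (z t).
Proof.
move=> H s c z.
have h0 : h k 0 = 0 by have := H (-1) 0 0; rewrite scaler0 addr0 scaleN1r addNr.
elim: s => [|t s IH]; first by rewrite !big_nil.
by rewrite !big_cons H IH.
Qed.

Lemma gFw (g : forall n, ps_car R n -> ps_car P n) : is_psmorph R P g ->
  g 1%N (Rx1 K) = d -> g 2%N (Rone K 2) = mu ->
  forall n u, all (fun c => c < n.+1)%N u -> g n.+1 (FwR K n u) = FwP n u.
Proof.
case=> Hl Hc Hid gd gmu n u; elim/last_ind: u => [_|u c IH].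
  rewrite /FwR /Fw /=; elim: n => [|n IHn] //.
  have := Hc 2%N n.+1 1%N erefl erefl (Rone K 2) (ps_mun R (Rone K 2) n).
  by rewrite gmu IHn; exact.
rewrite all_rcons => /andP[hc hu]; apply: pk_inj.
rewrite /FwR !Fw_rcons -/(FwR K n u).
rewrite (fam_pk g (@compDP K R (Rx1 K) _ c.+1 (FwR K n u))) compDP.
by rewrite Hc // gd IH.
Qed.

Lemma f_x1 : (@fP K P d mu 1%N) (Rx1 K) = d.
Proof.
have -> : Rx1 K = FwR K 0 [:: 0%N].
  by apply: ncpoly_ext => w; rewrite FwR_val // valRx1.
rewrite fFw //; apply: pk_inj.
by rewrite -[[:: 0%N]]/(rcons [::] 0%N) Fw_rcons compDP unitlP.
Qed.

Lemma f_mu : (@fP K P d mu 2%N) (Rone K 2) = mu.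
Proof.
have -> : Rone K 2 = FwR K 1 [::].
  by apply: ncpoly_ext => w; rewrite FwR_val // valRone.
rewrite fFw //; apply: pk_inj.
by rewrite Fw_nil /= (G2.unitrP HP (n:=2) (i:=1)).
Qed.

Lemma f_id : (@fP K P d mu 1%N) (ps_id R) = ps_id P.
Proof.
have -> : ps_id R = FwR K 0 [::] by [].
by rewrite fFw.
Qed.

Lemma f_morph : is_psmorph R P (@fP K P d mu).
Proof.
split.
- by move=> n a x y; apply: fP_lin.
- by move=> m n i hn hi x y; apply: fP_morph.
- exact: f_id.
Qed.

Lemma f_unique (g : forall n, ps_car R n -> ps_car P n) : is_psmorph R P g ->
  g 1%N (Rx1 K) = d -> g 2%N (Rone K 2) = mu ->
  forall (n : nat) (x : ps_car R n.+1), g n.+1 x = @fP K P d mu n.+1 x.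
Proof.
move=> Hg gd gmu n x.
rewrite (decomp (@bndP K n.+1 x)).
have [Hl _ _] := Hg.
rewrite (lin_lsum (Hl n.+1)) fP_lsum.
apply: eq_big_seq => u; rewrite mem_words => /andP[_ hu].
by rewrite (gFw Hg gd gmu hu) fFw.
Qed.

End U3.

Theorem main_thm (K : fieldType) :
  is_preShuffle (RAlg K) /\
  PerAsDer_rel (RAlg K) (Rx1 K) (Rone K 2) /\
  (forall (P : preShuffle K), is_preShuffle P ->
     forall (d : ps_car P 1) (mu : ps_car P 2), PerAsDer_rel P d mu ->
       exists f : forall n, ps_car (RAlg K) n -> ps_car P n,
         [/\ is_psmorph (RAlg K) P f, f 1%N (Rx1 K) = d, f 2%N (Rone K 2) = mu
           & forall g : forall n, ps_car (RAlg K) n -> ps_car P n,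
               is_psmorph (RAlg K) P g -> g 1%N (Rx1 K) = d -> g 2%N (Rone K 2) = mu ->
               forall (n : nat) (x : ps_car (RAlg K) n.+1), g n.+1 x = f n.+1 x]) /\
  (forall (n : nat) (s : seq nat), all (fun j => 0 < j <= n.+1)%N s ->
     forall w : seq nat,
       val (foldl (fun a j => ps_compD (RAlg K) (Rx1 K) j a) (ps_mun (RAlg K) (Rone K 2) n) s) w
       = (w == map predn s)%:R).
Proof.
split; first exact: R_is_preShuffle.
split; first exact: Rrel.
split.
  move=> P HP d mu HR; exists (@fP K P d mu); split.
  - exact: f_morph.
  - exact: f_x1.
  - exact: f_mu.
  - by move=> g Hg gd gmu n x; apply: f_unique.
by move=> n s hs w; apply: clause4.
Qed.

End U3.
Import U3.

Local Open Scope ring_scope.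

Theorem theorem6p2 (K : fieldType) :
  (* R is a pre-shuffle algebra *)
  is_preShuffle (RAlg K) /\
  (* x_1 in R_1 and 1 in R_2 satisfy the defining relations of PerAsDer *)
  PerAsDer_rel (RAlg K) (Rx1 K) (Rone K 2) /\
  (* universal property: (R, x_1, 1) is the pre-shuffle algebra presented
     by D, mu and the PerAsDer relations, i.e. R is isomorphic to PerAsDer
     via id |-> 1, D |-> x_1, mu |-> 1 *)
  (forall (P : preShuffle K), is_preShuffle P ->
     forall (d : ps_car P 1) (mu : ps_car P 2), PerAsDer_rel P d mu ->
       exists f : forall n, ps_car (RAlg K) n -> ps_car P n,
         [/\ is_psmorph (RAlg K) P f, f 1%N (Rx1 K) = d, f 2%N (Rone K 2) = mu
           & forall g : forall n, ps_car (RAlg K) n -> ps_car P n,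
               is_psmorph (RAlg K) P g -> g 1%N (Rx1 K) = d -> g 2%N (Rone K 2) = mu ->
               forall (n : nat) (x : ps_car (RAlg K) n.+1), g n.+1 x = f n.+1 x]) /\
  (* (..((mu_n o_{j_k} D) o_{j_(k-1)} D)..) o_{j_1} D  =  x_{j_k} ... x_{j_1},
     with s = [:: j_k; ...; j_1] listed in order of application *)
  (forall (n : nat) (s : seq nat), all (fun j => 0 < j <= n.+1)%N s ->
     forall w : seq nat,
       val (foldl (fun a j => ps_compD (RAlg K) (Rx1 K) j a) (ps_mun (RAlg K) (Rone K 2) n) s) w
       = (w == map predn s)%:R).
Proof. exact: (U3.main_thm K). Qed.
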